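(* Let $0<b<a$, $c=\sqrt{a^2-b^2}$, and let $h>0$ be defined by $\sinh(h/2)=c/b$ (equivalently $\cosh(h/2)=a/b$, $\tanh(h/2)=c/a$). For $\lambda\in(0,b)$ let the modulus $k\in(0,1)$ be given by $k^2=(a^2-b^2)/(a^2-\lambda^2)$, let $K=K(k)$, $K'=K(\sqrt{1-k^2})$, let $\delta\in(0,2K)$ be given by $\operatorname{sn}(\delta/2,k)=\lambda/b$, and set $\zeta=2K-\delta\in(0,2K)$. Let $\tilde q_0(t)=(a\operatorname{sn}(t,k),\,b\operatorname{cn}(t,k))$ and $\hat q_0(s)=(a\tanh s,\,b\operatorname{sech} s)$. Then \[\lim_{\lambda\to b^-}k=1,\quad \lim_{\lambda\to b^-}K=+\infty,\quad \lim_{\lambda\to b^-}K'=\pi/2,\quad \lim_{\lambda\to b^-}\zeta=h,\] and moreover \[\lim_{\lambda\to b^-}\tilde q_0(t)=\hat q_0(t),\qquad \lim_{\lambda\to b^-}\tilde q_0(t\pm\delta)=-\hat q_0(t\mp h),\] where both limits are uniform on compact subsets of $\mathbb{R}$, but not uniform on $\mathbb{R}$.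
   Context: $K(k)=\int_0^{\pi/2}(1-k^2\sin^2\phi)^{-1/2}\,d\phi$ is the complete elliptic integral of the first kind. The amplitude $\varphi=\operatorname{am}(t,k)$ is defined by $t=\int_0^\varphi(1-k^2\sin^2\phi)^{-1/2}d\phi$, and $\operatorname{sn}(t,k)=\sin\varphi$, $\operatorname{cn}(t,k)=\cos\varphi$ are the Jacobian elliptic sine and cosine. *)

(* Defs.v *)
From Stdlib Require Import Reals Lra ClassicalEpsilon.
From Coquelicot Require Import Coquelicot.
Open Scope R_scope.

Definition ellF (k phi : R) : R :=
  RInt (fun x => / sqrt (1 - k ^ 2 * sin x ^ 2)) 0 phi.

Definition ellK (k : R) : R := ellF k (PI / 2).

(* Jacobi amplitude: the phi with F(phi,k) = t (unique for 0 <= k < 1) *)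
Definition am (t k : R) : R :=
  epsilon (inhabits 0) (fun phi => ellF k phi = t).

Definition sn (t k : R) : R := sin (am t k).
Definition cn (t k : R) : R := cos (am t k).

Definition sech (s : R) : R := / cosh s.

Definition kmod (a b lam : R) : R := sqrt ((a ^ 2 - b ^ 2) / (a ^ 2 - lam ^ 2)).
Definition Kl (a b lam : R) : R := ellK (kmod a b lam).
Definition Kpl (a b lam : R) : R := ellK (sqrt (1 - kmod a b lam ^ 2)).
Definition deltal (a b lam : R) : R :=
  epsilon (inhabits 0)
    (fun d => 0 < d < 2 * Kl a b lam /\ sn (d / 2) (kmod a b lam) = lam / b).
Definition zetal (a b lam : R) : R := 2 * Kl a b lam - deltal a b lam.

Definition qt1 (a b lam t : R) : R := a * sn t (kmod a b lam).
Definition qt2 (a b lam t : R) : R := b * cn t (kmod a b lam).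
Definition qh1 (a b s : R) : R := a * tanh s.
Definition qh2 (a b s : R) : R := b * sech s.

Definition unif_compact (b : R) (f : R -> R -> R * R) (g : R -> R * R) : Prop :=
  forall M eps : R, 0 < eps ->
    at_left b (fun lam => forall t, Rabs t <= M ->
      Rabs (fst (f lam t) - fst (g t)) < eps /\ Rabs (snd (f lam t) - snd (g t)) < eps).

Definition unif_R (b : R) (f : R -> R -> R * R) (g : R -> R * R) : Prop :=
  forall eps : R, 0 < eps ->
    at_left b (fun lam => forall t,
      Rabs (fst (f lam t) - fst (g t)) < eps /\ Rabs (snd (f lam t) - snd (g t)) < eps).

(* Main.v *)
Require Import Defs.
From Stdlib Require Import Reals Lra ClassicalEpsilon.
From Coquelicot Require Import Coquelicot.
Open Scope R_scope.

Lemma ballR (x e y : R) : ball x e y <-> Rabs (y - x) < e.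
Proof. reflexivity. Qed.

Lemma exp_le' x y : x <= y -> exp x <= exp y.
Proof. intros H. destruct (Rle_lt_or_eq_dec _ _ H) as [H1|H1].
  - left; apply exp_increasing; auto. - subst; lra. Qed.

Lemma mvt_all (f df : R -> R) (x y : R) :
  (forall z, is_derive f z (df z)) ->
  exists c, Rmin x y <= c <= Rmax x y /\ f y - f x = df c * (y - x).
Proof.
  intros Hd. apply (MVT_gen f x y df).
  - intros z _. apply Hd.
  - intros z _. apply continuity_pt_filterlim; apply (ex_derive_continuous (V:=R_NormedModule)); eexists; apply Hd.
Qed.

Lemma lip_all (f df : R -> R) L x y : (forall z, is_derive f z (df z)) ->
  (forall z, Rabs (df z) <= L) -> Rabs (f y - f x) <= L * Rabs (y - x).
Proof. intros Hd Hb. destruct (mvt_all f df x y Hd) as [c [_ Hc]].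
  rewrite Hc, Rabs_mult. apply Rmult_le_compat_r; [apply Rabs_pos| apply Hb]. Qed.

Lemma sin_lip x y : Rabs (sin y - sin x) <= Rabs (y - x).
Proof.
  rewrite <- (Rmult_1_l (Rabs (y - x))). apply (lip_all sin cos).
  - intro z. auto_derive; auto; ring.
  - intro z. apply Rabs_le. pose proof (COS_bound z). lra.
Qed.

Lemma cos_lip x y : Rabs (cos y - cos x) <= Rabs (y - x).
Proof.
  rewrite <- (Rmult_1_l (Rabs (y - x))). apply (lip_all cos (fun z => - sin z)).
  - intro z. auto_derive; auto; ring.
  - intro z. apply Rabs_le. pose proof (SIN_bound z). lra.
Qed.

Definition fk (k x : R) := / sqrt (1 - k ^ 2 * sin x ^ 2).

Lemma fk_den k x : k ^ 2 < 1 -> 0 < 1 - k ^ 2 * sin x ^ 2.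
Proof. intros Hk. assert (0 <= sin x ^ 2 <= 1). { pose proof (SIN_bound x). nra. }
  assert (0 <= k ^ 2) by nra. nra. Qed.

Lemma fk_ge1 k x : k ^ 2 < 1 -> 1 <= fk k x.
Proof. intros Hk. unfold fk. pose proof (fk_den k x Hk).
  assert (0 <= k ^ 2 * sin x ^ 2) by (apply Rmult_le_pos; apply pow2_ge_0).
  assert (sqrt (1 - k ^ 2 * sin x ^ 2) <= 1).
  { apply Rle_trans with (sqrt 1); [apply sqrt_le_1_alt; lra | rewrite sqrt_1; lra]. }
  apply Rle_trans with (/1); [rewrite Rinv_1; lra|].
  apply Rinv_le_contravar; auto. apply sqrt_lt_R0; auto. Qed.

Lemma fk_le k x : k ^ 2 < 1 -> fk k x <= / sqrt (1 - k ^ 2).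
Proof. intros Hk. unfold fk. apply Rinv_le_contravar.
  - apply sqrt_lt_R0; lra.
  - apply sqrt_le_1_alt. assert (sin x ^ 2 <= 1). { pose proof (SIN_bound x). nra. }
    assert (0 <= k ^ 2) by nra. nra. Qed.

Lemma fk_cont k x : k ^ 2 < 1 -> continuous (fk k) x.
Proof. intros Hk. apply (ex_derive_continuous (V:=R_NormedModule)). unfold fk. auto_derive.
  pose proof (fk_den k x Hk). split. nra. split; auto.
  apply Rgt_not_eq, sqrt_lt_R0. nra. Qed.

Lemma ellF_der k x : k ^ 2 < 1 -> is_derive (ellF k) x (fk k x).
Proof. intros Hk. unfold ellF. apply (is_derive_RInt (fk k) _ 0).
  - apply filter_forall. intros y. apply (RInt_correct (V:=R_CompleteNormedModule)), (ex_RInt_continuous (V:=R_CompleteNormedModule)).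
    intros z _. apply fk_cont; auto.
  - apply fk_cont; auto.
Qed.

Lemma ellF0 k : ellF k 0 = 0.
Proof. unfold ellF. exact (RInt_point (V:=R_CompleteNormedModule) 0 _). Qed.

Lemma ellF_grow k x y : k ^ 2 < 1 -> x <= y -> y - x <= ellF k y - ellF k x.
Proof. intros Hk Hxy.
  destruct (mvt_all (ellF k) (fk k) x y (fun z => ellF_der k z Hk)) as [c [_ Hc]].
  rewrite Hc. pose proof (fk_ge1 k c Hk). nra. Qed.

Lemma ellF_lip_inv k x y : k ^ 2 < 1 -> Rabs (y - x) <= Rabs (ellF k y - ellF k x).
Proof. intros Hk. destruct (Rle_dec x y) as [H|H].
  - pose proof (ellF_grow k x y Hk H). unfold Rabs; repeat destruct Rcase_abs; lra.
  - pose proof (ellF_grow k y x Hk ltac:(lra)). unfold Rabs; repeat destruct Rcase_abs; lra.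
Qed.

Lemma ellF_inj k x y : k ^ 2 < 1 -> ellF k x = ellF k y -> x = y.
Proof. intros Hk E. pose proof (ellF_lip_inv k x y Hk). rewrite E in H.
  rewrite Rminus_diag, Rabs_R0 in H. pose proof (Rabs_pos (y - x)).
  assert (Rabs (y - x) = 0) by lra. apply Rabs_eq_0 in H1. lra. Qed.

Lemma ellF_surj k t : k ^ 2 < 1 -> exists phi, ellF k phi = t.
Proof.
  intros Hk. assert (Hc : continuity (ellF k)).
  { intro z. apply continuity_pt_filterlim; apply (ex_derive_continuous (V:=R_NormedModule)); eexists; apply ellF_der; auto. }
  assert (Hb : Rmin (ellF k 0) (ellF k t) <= t <= Rmax (ellF k 0) (ellF k t)).
  { rewrite ellF0. destruct (Rle_dec 0 t) as [H|H].
    - pose proof (ellF_grow k 0 t Hk H). rewrite ellF0 in H0.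
      unfold Rmin, Rmax; destruct Rle_dec; lra.
    - pose proof (ellF_grow k t 0 Hk ltac:(lra)). rewrite ellF0 in H0.
      unfold Rmin, Rmax; destruct Rle_dec; lra. }
  destruct (IVT_gen (ellF k) 0 t t Hc Hb) as [x [_ Hx]]. exists x; auto.
Qed.

Lemma ellF_am k t : k ^ 2 < 1 -> ellF k (am t k) = t.
Proof. intros Hk. unfold am. apply epsilon_spec. apply ellF_surj; auto. Qed.

Lemma am_ellF k phi : k ^ 2 < 1 -> am (ellF k phi) k = phi.
Proof. intros Hk. apply (ellF_inj k); auto. apply ellF_am; auto. Qed.

Lemma am0 k : k ^ 2 < 1 -> am 0 k = 0.
Proof. intros Hk. rewrite <- (ellF0 k) at 1. apply am_ellF; auto. Qed.

Lemma ellF_shift k x : k ^ 2 < 1 -> ellF k (x + PI) - ellF k x = ellF k PI.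
Proof. intros Hk.
  assert (Hd : forall z, is_derive (fun z => ellF k (z + PI) - ellF k z) z 0).
  { intro z. replace 0 with (1 * fk k (z + PI) - fk k z).
    2:{ unfold fk. rewrite neg_sin. replace ((- sin z) ^ 2) with (sin z ^ 2) by ring. ring. }
    apply (is_derive_minus (fun z => ellF k (z + PI)) (ellF k)).
    - apply (is_derive_comp (ellF k) (fun z => z + PI)). apply ellF_der; auto.
      auto_derive; auto; ring.
    - apply ellF_der; auto. }
  destruct (mvt_all _ (fun _ => 0) 0 x Hd) as [c [_ Hc]].
  rewrite Rplus_0_l, ellF0 in Hc. lra.
Qed.

Lemma ellF_PI k : k ^ 2 < 1 -> ellF k PI = 2 * ellK k.
Proof. intros Hk.
  assert (Hd : forall z, is_derive (fun z => ellF k (PI - z) + ellF k z) z 0).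
  { intro z. replace 0 with (-1 * fk k (PI - z) + fk k z).
    2:{ unfold fk. rewrite sin_PI_x. ring. }
    apply (is_derive_plus (fun z => ellF k (PI - z)) (ellF k)).
    - apply (is_derive_comp (ellF k) (fun z => PI - z)). apply ellF_der; auto.
      auto_derive; auto; ring.
    - apply ellF_der; auto. }
  destruct (mvt_all _ (fun _ => 0) 0 (PI/2) Hd) as [c [_ Hc]].
  unfold ellK. replace (PI - PI/2) with (PI/2) in Hc by field.
  rewrite Rminus_0_r, ellF0 in Hc. lra.
Qed.

Lemma am_plus2K k t : k ^ 2 < 1 -> am (t + 2 * ellK k) k = am t k + PI.
Proof. intros Hk. apply (ellF_inj k); auto. rewrite ellF_am; auto.
  pose proof (ellF_shift k (am t k) Hk). rewrite ellF_am in H; auto.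
  rewrite ellF_PI in H; auto. lra. Qed.

Lemma am_minus2K k t : k ^ 2 < 1 -> am (t - 2 * ellK k) k = am t k - PI.
Proof. intros Hk. apply (ellF_inj k); auto. rewrite ellF_am; auto.
  pose proof (ellF_shift k (am t k - PI) Hk).
  replace (am t k - PI + PI) with (am t k) in H by ring. rewrite ellF_am in H; auto.
  rewrite ellF_PI in H; auto. lra. Qed.

Lemma sin_mPI x : sin (x - PI) = - sin x.
Proof. rewrite sin_minus, sin_PI, cos_PI. ring. Qed.
Lemma cos_mPI x : cos (x - PI) = - cos x.
Proof. rewrite cos_minus, sin_PI, cos_PI. ring. Qed.

Lemma cosh_sinh x : cosh x ^ 2 = 1 + sinh x ^ 2.
Proof. unfold cosh, sinh. assert (exp x * exp (- x) = 1).
  { rewrite <- exp_plus. replace (x + - x) with 0 by ring. apply exp_0. }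
  nra. Qed.

Lemma cosh_pos x : 0 < cosh x.
Proof. unfold cosh. pose proof (exp_pos x). pose proof (exp_pos (-x)). lra. Qed.

Lemma cosh_ge1 x : 1 <= cosh x.
Proof. pose proof (cosh_sinh x). pose proof (cosh_pos x). pose proof (pow2_ge_0 (sinh x)). nra. Qed.

Lemma sqrt_cosh x : sqrt (1 + (sinh x)²) = cosh x.
Proof. unfold Rsqr. replace (1 + sinh x * sinh x) with (cosh x ^ 2).
  - apply sqrt_pow2. left; apply cosh_pos.
  - rewrite cosh_sinh. ring. Qed.

Definition psi (s : R) := atan (sinh s).

Lemma sin_psi s : sin (psi s) = tanh s.
Proof. unfold psi, tanh. rewrite sin_atan, sqrt_cosh. reflexivity. Qed.
Lemma cos_psi s : cos (psi s) = / cosh s.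
Proof. unfold psi. rewrite cos_atan, sqrt_cosh. unfold Rdiv. ring. Qed.

Lemma psi_der s : is_derive psi s (/ cosh s).
Proof. apply is_derive_Reals. unfold psi.
  replace (/ cosh s) with (/ (1 + sinh s ^ 2) * cosh s).
  2:{ rewrite <- cosh_sinh. pose proof (cosh_pos s). field. lra. }
  apply (derivable_pt_lim_comp sinh atan s (cosh s)). apply derivable_pt_lim_sinh.
  apply derivable_pt_lim_atan.
Qed.

Lemma psi_lip x y : Rabs (psi y - psi x) <= Rabs (y - x).
Proof.
  rewrite <- (Rmult_1_l (Rabs (y - x))). apply (lip_all psi (fun z => / cosh z)).
  - apply psi_der.
  - intro z. pose proof (cosh_ge1 z). rewrite Rabs_pos_eq.
    + apply Rle_trans with (/1); [apply Rinv_le_contravar; lra| rewrite Rinv_1; lra].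
    + left; apply Rinv_0_lt_compat; lra.
Qed.

Lemma psi_bound s : - PI / 2 < psi s < PI / 2.
Proof. apply atan_bound. Qed.

Lemma E_der k s : k ^ 2 < 1 ->
  is_derive (fun s => ellF k (psi s)) s (/ sqrt (1 + (1 - k ^ 2) * sinh s ^ 2)).
Proof. intros Hk.
  replace (/ sqrt (1 + (1 - k ^ 2) * sinh s ^ 2)) with (/ cosh s * fk k (psi s)).
  - apply (is_derive_comp (ellF k) psi). apply ellF_der; auto. apply psi_der.
  - unfold fk. rewrite sin_psi. pose proof (cosh_pos s). pose proof (cosh_sinh s).
    assert (HD : 0 < 1 + (1 - k ^ 2) * sinh s ^ 2).
    { pose proof (pow2_ge_0 (sinh s)). nra. }
    replace (1 - k ^ 2 * tanh s ^ 2) with ((1 + (1 - k ^ 2) * sinh s ^ 2) / cosh s ^ 2).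
    2:{ unfold tanh. replace ((sinh s / cosh s) ^ 2) with (sinh s ^ 2 / cosh s ^ 2) by (field; lra).
        rewrite H0. field. pose proof (pow2_ge_0 (sinh s)); lra. }
    rewrite sqrt_div; [| lra | apply pow2_gt_0; lra]. rewrite sqrt_pow2; [|lra].
    assert (0 < sqrt (1 + (1 - k ^ 2) * sinh s ^ 2)) by (apply sqrt_lt_R0; lra).
    field. lra.
Qed.

Lemma sinh_abs_le c : Rabs (sinh c) <= exp (Rabs c).
Proof. unfold sinh. pose proof (exp_pos c). pose proof (exp_pos (-c)).
  assert (exp c <= exp (Rabs c)) by (apply exp_le'; apply Rle_abs).
  assert (exp (- c) <= exp (Rabs c)) by (apply exp_le'; rewrite <- Rabs_Ropp; apply Rle_abs).
  apply Rabs_le. lra. Qed.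

Definition Bd (k s : R) := Rabs s * ((1 - k ^ 2) * exp (Rabs s) ^ 2).

Lemma E_bound k s : k ^ 2 < 1 -> Rabs (ellF k (psi s) - s) <= Bd k s.
Proof. intros Hk.
  set (g := fun s => ellF k (psi s) - s).
  assert (Hd : forall z, is_derive g z (/ sqrt (1 + (1 - k ^ 2) * sinh z ^ 2) - 1)).
  { intro z. apply (is_derive_minus (fun s => ellF k (psi s)) (fun s => s)).
    apply E_der; auto. auto_derive; auto. }
  destruct (mvt_all g _ 0 s Hd) as [c [Hc1 Hc]].
  unfold g in Hc. unfold psi in Hc. rewrite sinh_0, atan_0, ellF0 in Hc.
  change (ellF k (psi s) - s - (0 - 0) = (/ sqrt (1 + (1 - k ^ 2) * sinh c ^ 2) - 1) * (s - 0)) in Hc.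
  replace (ellF k (psi s) - s) with ((/ sqrt (1 + (1 - k ^ 2) * sinh c ^ 2) - 1) * s) by lra.
  rewrite Rabs_mult. unfold Bd. rewrite Rmult_comm. apply Rmult_le_compat_l; [apply Rabs_pos|].
  assert (Hcs : Rabs c <= Rabs s).
  { unfold Rmin, Rmax in Hc1. destruct Rle_dec; unfold Rabs; repeat destruct Rcase_abs; lra. }
  set (u := (1 - k ^ 2) * sinh c ^ 2).
  assert (Hu : 0 <= u). { unfold u. pose proof (pow2_ge_0 (sinh c)). nra. }
  assert (Hr1 : 1 <= sqrt (1 + u)).
  { apply Rle_trans with (sqrt 1); [rewrite sqrt_1; lra| apply sqrt_le_1_alt; lra]. }
  assert (Hrr : sqrt (1 + u) * sqrt (1 + u) = 1 + u) by (apply sqrt_sqrt; lra).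
  assert (Hiv : sqrt (1 + u) * / sqrt (1 + u) = 1) by (field; lra).
  assert (Hi0 : 0 < / sqrt (1 + u)) by (apply Rinv_0_lt_compat; lra).
  assert (Hle : Rabs (/ sqrt (1 + u) - 1) <= u).
  { rewrite Rabs_left1. 2:{ nra. } nra. }
  apply Rle_trans with u; auto. unfold u.
  apply Rmult_le_compat_l; [lra|].
  pose proof (sinh_abs_le c). pose proof (exp_le' _ _ Hcs).
  rewrite <- pow2_abs. pose proof (Rabs_pos (sinh c)). pose proof (exp_pos (Rabs c)).
  apply pow_incr. split; lra.
Qed.

Lemma am_psi k s : k ^ 2 < 1 -> Rabs (am s k - psi s) <= Bd k s.
Proof. intros Hk. apply Rle_trans with (Rabs (ellF k (am s k) - ellF k (psi s))).
  apply ellF_lip_inv; auto. rewrite ellF_am; auto.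
  rewrite Rabs_minus_sym. apply E_bound; auto. Qed.

Lemma Bd_le k s S : k ^ 2 < 1 -> Rabs s <= S -> Bd k s <= S * ((1 - k ^ 2) * exp S ^ 2).
Proof. intros Hk Hs. unfold Bd. pose proof (Rabs_pos s).
  assert (exp (Rabs s) ^ 2 <= exp S ^ 2).
  { apply pow_incr. split. left; apply exp_pos. apply exp_le'; auto. }
  apply Rmult_le_compat; auto; try lra.
  - apply Rmult_le_pos; [lra| apply pow2_ge_0].
  - apply Rmult_le_compat_l; lra.
Qed.

Lemma core (M eps s0 : R) : 0 < eps -> exists rho eta, 0 < rho /\ 0 < eta /\
  forall k s t, k ^ 2 < 1 -> 1 - k ^ 2 < eta -> Rabs (s - s0) < rho -> Rabs t <= M ->
  Rabs (sin (am (t + s) k) - sin (psi (t + s0))) < eps /\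
  Rabs (cos (am (t + s) k) - cos (psi (t + s0))) < eps.
Proof. intros He.
  set (M' := Rabs M + Rabs s0 + 1).
  assert (HM' : 0 < M') by (unfold M'; pose proof (Rabs_pos M); pose proof (Rabs_pos s0); lra).
  assert (HE : 0 < exp M' ^ 2) by (apply pow2_gt_0; pose proof (exp_pos M'); lra).
  exists (Rmin 1 (eps / 2)), ((eps / 2) / (M' * exp M' ^ 2)).
  split. apply Rmin_glb_lt; lra. split. apply Rdiv_lt_0_compat; [lra| nra].
  intros k s t Hk Heta Hs Ht.
  assert (Hs1 : Rabs (s - s0) < 1) by (eapply Rlt_le_trans; [apply Hs| apply Rmin_l]).
  assert (Hs2 : Rabs (s - s0) < eps / 2) by (eapply Rlt_le_trans; [apply Hs| apply Rmin_r]).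
  assert (Hts : Rabs (t + s) <= M').
  { unfold M'. replace (t + s) with (t + (s - s0) + s0) by ring.
    pose proof (Rabs_triang (t + (s - s0)) s0). pose proof (Rabs_triang t (s - s0)).
    pose proof (Rle_abs M). lra. }
  assert (HB : Bd k (t + s) < eps / 2).
  { apply Rle_lt_trans with (M' * ((1 - k ^ 2) * exp M' ^ 2)). apply Bd_le; auto.
    assert (0 <= 1 - k ^ 2) by lra.
    apply Rlt_le_trans with (M' * (((eps / 2) / (M' * exp M' ^ 2)) * exp M' ^ 2)).
    - apply Rmult_lt_compat_l; [lra|]. apply Rmult_lt_compat_r; lra.
    - right. field. pose proof (exp_pos M'). split; lra. }
  assert (Hps : Rabs (psi (t + s) - psi (t + s0)) < eps / 2).
  { apply Rle_lt_trans with (Rabs (t + s - (t + s0))). apply psi_lip.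
    replace (t + s - (t + s0)) with (s - s0) by ring. auto. }
  pose proof (am_psi k (t + s) Hk).
  assert (Hd : Rabs (am (t + s) k - psi (t + s0)) < eps).
  { replace (am (t + s) k - psi (t + s0)) with ((am (t + s) k - psi (t + s)) + (psi (t + s) - psi (t + s0))) by ring.
    eapply Rle_lt_trans. apply Rabs_triang. lra. }
  split.
  - eapply Rle_lt_trans; [| apply Hd]. rewrite Rabs_minus_sym, (Rabs_minus_sym (am _ _)). apply sin_lip.
  - eapply Rle_lt_trans; [| apply Hd]. rewrite Rabs_minus_sym, (Rabs_minus_sym (am _ _)). apply cos_lip.
Qed.

Section Lam.
Variables a b : R.
Hypothesis hb : 0 < b.
Hypothesis hba : b < a.

Definition gl (lam : R) := (b ^ 2 - lam ^ 2) / (a ^ 2 - lam ^ 2).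

Lemma ev_small eta : 0 < eta -> at_left b (fun lam => (0 < lam < b) /\ gl lam < eta).
Proof. intros He. unfold at_left, within.
  assert (Hab : 0 < a ^ 2 - b ^ 2) by nra.
  assert (Hr : 0 < Rmin (b / 2) (eta * (a ^ 2 - b ^ 2) / (2 * b))).
  { apply Rmin_glb_lt. lra. apply Rdiv_lt_0_compat; nra. }
  exists (mkposreal _ Hr). intros y Hy Hyb. apply ballR in Hy. change (Rabs (y - b) < Rmin (b / 2) (eta * (a ^ 2 - b ^ 2) / (2 * b))) in Hy.
  pose proof (Rmin_l (b / 2) (eta * (a ^ 2 - b ^ 2) / (2 * b))).
  pose proof (Rmin_r (b / 2) (eta * (a ^ 2 - b ^ 2) / (2 * b))).
  rewrite Rabs_left in Hy by lra.
  assert (Hy0 : 0 < y) by lra. split; [lra|].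
  unfold gl. apply Rlt_div_l. nra.
  assert (Hby : b - y < eta * (a ^ 2 - b ^ 2) / (2 * b)) by lra.
  assert ((b - y) * (2 * b) < eta * (a ^ 2 - b ^ 2)).
  { assert (E : eta * (a ^ 2 - b ^ 2) / (2 * b) * (2 * b) = eta * (a ^ 2 - b ^ 2)) by (field; lra).
    rewrite <- E. apply Rmult_lt_compat_r; lra. }
  assert (b ^ 2 - y ^ 2 <= (b - y) * (2 * b)) by nra.
  assert (eta * (a ^ 2 - b ^ 2) <= eta * (a ^ 2 - y ^ 2)) by (apply Rmult_le_compat_l; [lra| nra]).
  lra.
Qed.

Lemma kmod_sq lam : 0 < lam < b -> kmod a b lam ^ 2 = 1 - gl lam.
Proof. intros Hl. unfold kmod, gl. rewrite pow2_sqrt.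
  - field. nra.
  - apply Rmult_le_pos; [nra| left; apply Rinv_0_lt_compat; nra].
Qed.

Lemma gl_pos lam : 0 < lam < b -> 0 < gl lam.
Proof. intros. unfold gl. apply Rdiv_lt_0_compat; nra. Qed.

Lemma kmod_props lam : 0 < lam < b ->
  let k := kmod a b lam in 0 <= k /\ k < 1 /\ k ^ 2 < 1 /\ 1 - k ^ 2 = gl lam.
Proof. intros Hl k. pose proof (kmod_sq lam Hl). pose proof (gl_pos lam Hl).
  assert (0 <= k) by apply sqrt_pos. fold k in H. repeat split; try lra; nra. Qed.

End Lam.

Lemma sc1 z : sin z ^ 2 + cos z ^ 2 = 1.
Proof. pose proof (sin2_cos2 z). unfold Rsqr in H. lra. Qed.

Lemma u_der m z : 0 < m -> 0 < sin z -> is_derive (fun z => cos z / (m * sin z)) z (- / (m * sin z ^ 2)).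
Proof. intros Hm HS. auto_derive.
  - apply Rgt_not_eq, Rmult_gt_0_compat; auto.
  - replace (- / (m * sin z ^ 2)) with (- (sin z ^ 2 + cos z ^ 2) / (m * sin z ^ 2)).
    + field. split; apply Rgt_not_eq; auto.
    + rewrite sc1. field. split; apply Rgt_not_eq; auto.
Qed.

Lemma Y_der k m z : k ^ 2 < 1 -> 0 < m -> m ^ 2 = 1 - k ^ 2 -> 0 < sin z ->
  is_derive (fun z => ellF k (atan (cos z / (m * sin z)))) z (- fk k z).
Proof. intros Hk Hm Hmk HS.
  set (u := cos z / (m * sin z)).
  assert (HY : is_derive (fun z => atan (cos z / (m * sin z))) z (/ (1 + u ^ 2) * - / (m * sin z ^ 2))).
  { apply is_derive_Reals. apply (derivable_pt_lim_comp (fun z => cos z / (m * sin z)) atan).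
    apply is_derive_Reals, u_der; auto. apply derivable_pt_lim_atan. }
  replace (- fk k z) with ((/ (1 + u ^ 2) * - / (m * sin z ^ 2)) * fk k (atan u)).
  { apply (is_derive_comp (ellF k) (fun z => atan (cos z / (m * sin z)))). apply ellF_der; auto. auto. }
  set (S := sin z). set (Cc := cos z). fold S in HS.
  assert (Hsc : S ^ 2 + Cc ^ 2 = 1) by apply sc1.
  set (Q := sqrt (1 + u²)).
  assert (HQ0 : 0 < Q). { apply sqrt_lt_R0. pose proof (Rle_0_sqr u). lra. }
  assert (HQ : Q ^ 2 = 1 + u ^ 2).
  { unfold Q. rewrite pow2_sqrt. unfold Rsqr; ring. pose proof (Rle_0_sqr u). lra. }
  assert (HA : 1 - k ^ 2 * sin (atan u) ^ 2 = (/ (S * Q)) ^ 2).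
  { rewrite sin_atan. fold Q. replace (k ^ 2) with (1 - m ^ 2) by lra.
    replace ((u / Q) ^ 2) with (u ^ 2 / Q ^ 2) by (field; lra). rewrite HQ.
    assert (E : 1 - (1 - m ^ 2) * (u ^ 2 / (1 + u ^ 2)) - (/ (S * Q)) ^ 2
                = (Cc ^ 2 + S ^ 2 - 1) / (S ^ 2 * (1 + u ^ 2))).
    { replace ((/ (S * Q)) ^ 2) with (/ (S ^ 2 * Q ^ 2)) by (field; lra). rewrite HQ.
      unfold u. fold S Cc. field. pose proof (pow2_ge_0 (Cc / (m * S))).
      repeat split; try lra. unfold Rdiv in H. nra. }
    rewrite Rplus_comm in Hsc. rewrite Hsc in E. lra. }
  assert (HB : 1 - k ^ 2 * S ^ 2 = (m * S * Q) ^ 2).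
  { replace ((m * S * Q) ^ 2) with (m ^ 2 * S ^ 2 * Q ^ 2) by ring. rewrite HQ.
    unfold u. fold S Cc. replace (k ^ 2) with (1 - m ^ 2) by lra.
    field_simplify; [| lra]. nra. }
  unfold fk. rewrite HA. fold S. rewrite HB.
  rewrite !sqrt_pow2.
  - rewrite <- HQ. field. repeat split; lra.
  - apply Rmult_le_pos; [apply Rmult_le_pos|]; lra.
  - left. apply Rinv_0_lt_compat. nra.
Qed.

Lemma comp_id k m x : k ^ 2 < 1 -> 0 < m -> m ^ 2 = 1 - k ^ 2 -> 0 < x < PI ->
  ellF k (atan (cos x / (m * sin x))) + ellF k x = ellK k.
Proof. intros Hk Hm Hmk Hx.
  set (C := fun z => ellF k (atan (cos z / (m * sin z))) + ellF k z).
  assert (Hd : forall z, 0 < z < PI -> is_derive C z 0).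
  { intros z Hz. replace 0 with (plus (- fk k z) (fk k z)).
    2:{ unfold plus; simpl. ring. }
    apply (is_derive_plus (fun z => ellF k (atan (cos z / (m * sin z)))) (ellF k)).
    apply Y_der; auto. apply sin_gt_0; lra. apply ellF_der; auto. }
  assert (HPI := PI_RGT_0).
  destruct (MVT_gen C x (PI / 2) (fun _ => 0)) as [c [_ Hc]].
  - intros z Hz. apply Hd. unfold Rmin, Rmax in Hz; destruct Rle_dec in Hz; lra.
  - intros z Hz. apply continuity_pt_filterlim; apply (ex_derive_continuous (V:=R_NormedModule)).
    eexists; apply Hd. unfold Rmin, Rmax in Hz; destruct Rle_dec in Hz; lra.
  - unfold C in Hc. rewrite cos_PI2, sin_PI2 in Hc. unfold Rdiv in Hc.
    rewrite Rmult_0_l, atan_0, ellF0 in Hc. unfold ellK. unfold C. lra.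
Qed.

Section Zeta.
Variables a b : R.
Hypothesis hb : 0 < b.
Hypothesis hba : b < a.

Lemma deltal_val lam phi : 0 < lam < b -> 0 < phi < PI / 2 -> sin phi = lam / b ->
  deltal a b lam = 2 * ellF (kmod a b lam) phi.
Proof. intros Hl Hp Hs.
  destruct (kmod_props a b hba lam Hl) as [_ [_ [Hk _]]].
  set (k := kmod a b lam) in *.
  unfold deltal. fold k.
  set (P := fun d => 0 < d < 2 * Kl a b lam /\ sn (d / 2) k = lam / b).
  assert (HK : Kl a b lam = ellF k (PI / 2)) by reflexivity.
  assert (Hex : exists d, P d).
  { exists (2 * ellF k phi). unfold P. rewrite HK. split.
    - pose proof (ellF_grow k 0 phi Hk ltac:(lra)). pose proof (ellF_grow k phi (PI/2) Hk ltac:(lra)).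
      rewrite ellF0 in H. lra.
    - unfold sn. replace (2 * ellF k phi / 2) with (ellF k phi) by field.
      rewrite am_ellF; auto. }
  pose proof (epsilon_spec (inhabits 0) P Hex) as [[Hd1 Hd2] Hsn].
  set (d := epsilon (inhabits 0) P) in *.
  rewrite HK in Hd2. unfold sn in Hsn.
  set (p' := am (d / 2) k) in *.
  assert (He : ellF k p' = d / 2) by (apply ellF_am; auto).
  assert (Hp1 : 0 < p').
  { destruct (Rlt_le_dec 0 p') as [H|H]; auto.
    pose proof (ellF_grow k p' 0 Hk H). rewrite ellF0 in H0. lra. }
  assert (Hp2 : p' < PI / 2).
  { destruct (Rlt_le_dec p' (PI / 2)) as [H|H]; auto.
    pose proof (ellF_grow k (PI / 2) p' Hk H). lra. }
  assert (p' = phi) by (apply sin_inj; try lra; congruence).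
  rewrite <- H, He. field.
Qed.
End Zeta.

Section Zeta2.
Variables a b : R.
Hypothesis hb : 0 < b.
Hypothesis hba : b < a.

Lemma zeta_val lam : 0 < lam < b ->
  zetal a b lam = 2 * ellF (kmod a b lam) (psi (arcsinh (sqrt (a ^ 2 - lam ^ 2) / lam))).
Proof. intros Hl.
  destruct (kmod_props a b hba lam Hl) as [_ [_ [Hk Hkg]]].
  set (k := kmod a b lam) in *.
  set (m := sqrt (1 - k ^ 2)).
  assert (Hg := gl_pos a b hba lam Hl).
  assert (Hm2 : m ^ 2 = 1 - k ^ 2) by (unfold m; apply pow2_sqrt; lra).
  assert (Hm : 0 < m) by (unfold m; apply sqrt_lt_R0; lra).
  set (sq := sqrt (b ^ 2 - lam ^ 2)).
  assert (Hsq : 0 < sq) by (unfold sq; apply sqrt_lt_R0; nra).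
  assert (Hsq2 : sq ^ 2 = b ^ 2 - lam ^ 2) by (unfold sq; apply pow2_sqrt; nra).
  set (sa := sqrt (a ^ 2 - lam ^ 2)).
  assert (Hsa : 0 < sa) by (unfold sa; apply sqrt_lt_R0; nra).
  set (w := lam / sq).
  assert (Hw : sqrt (1 + w²) = b / sq).
  { rewrite <- (sqrt_pow2 (b / sq)). 2:{ apply Rlt_le, Rdiv_lt_0_compat; lra. }
    f_equal. unfold w, Rsqr. replace (lam / sq * (lam / sq)) with (lam ^ 2 / sq ^ 2) by (field; lra).
    replace ((b / sq) ^ 2) with (b ^ 2 / sq ^ 2) by (field; lra). rewrite Hsq2. field. nra. }
  set (phl := atan w).
  assert (Hsin : sin phl = lam / b). { unfold phl. rewrite sin_atan, Hw. unfold w. field. lra. }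
  assert (Hcos : cos phl = sq / b). { unfold phl. rewrite cos_atan, Hw. field. lra. }
  assert (Hw0 : 0 < w) by (apply Rdiv_lt_0_compat; lra).
  assert (Hp : 0 < phl < PI / 2).
  { unfold phl. split. rewrite <- atan_0. apply atan_increasing; auto. pose proof (atan_bound w). lra. }
  assert (Hmv : m = sq / sa).
  { unfold m. rewrite Hkg. unfold gl. unfold sq, sa. apply sqrt_div; nra. }
  assert (Hv : cos phl / (m * sin phl) = sa / lam).
  { rewrite Hcos, Hsin, Hmv. field. repeat split; lra. }
  pose proof (comp_id k m phl Hk Hm Hm2 ltac:(pose proof PI_RGT_0; lra)) as HC.
  rewrite Hv in HC.
  unfold zetal. rewrite (deltal_val a b hba lam phl Hl Hp Hsin). fold k.
  unfold psi. rewrite sinh_arcsinh. unfold Kl. fold k. fold sa. lra.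
Qed.
End Zeta2.

Section Main.
Variables a b h : R.
Hypothesis hb : 0 < b.
Hypothesis hba : b < a.
Hypothesis hh : 0 < h.
Hypothesis hsinh : sinh (h / 2) = sqrt (a ^ 2 - b ^ 2) / b.

Lemma part1 : filterlim (kmod a b) (at_left b) (locally 1).
Proof. apply filterlim_locally. intros eps.
  apply (filter_imp (fun lam => (0 < lam < b) /\ gl a b lam < eps)).
  2:{ apply ev_small; auto. apply cond_pos. }
  intros lam [Hl Hg]. apply ballR.
  destruct (kmod_props a b hba lam Hl) as [H0 [H1 [H2 H3]]].
  set (k := kmod a b lam) in *. rewrite Rabs_left by lra. nra.
Qed.

Lemma part2 : filterlim (Kl a b) (at_left b) (Rbar_locally p_infty).
Proof. intros P [M HM].
  set (T := Rabs M + 2).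
  assert (HT : 0 < T) by (unfold T; pose proof (Rabs_pos M); lra).
  assert (HE : 0 < exp T ^ 2) by (apply pow2_gt_0; pose proof (exp_pos T); lra).
  set (eta := / (T * exp T ^ 2)).
  assert (Heta : 0 < eta) by (apply Rinv_0_lt_compat; nra).
  change (at_left b (fun lam => P (Kl a b lam))).
  apply (filter_imp (fun lam => (0 < lam < b) /\ gl a b lam < eta)).
  2:{ apply ev_small; auto. }
  intros lam [Hl Hg]. apply HM.
  destruct (kmod_props a b hba lam Hl) as [H0 [H1 [H2 H3]]].
  unfold Kl, ellK. set (k := kmod a b lam) in *.
  pose proof (E_bound k T H2).
  pose proof (Bd_le k T T H2 (Req_le _ _ (Rabs_pos_eq T (Rlt_le _ _ HT)))).
  assert (T * ((1 - k ^ 2) * exp T ^ 2) < 1).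
  { rewrite H3. apply Rlt_le_trans with (T * (eta * exp T ^ 2)).
    - apply Rmult_lt_compat_l; [lra|]. apply Rmult_lt_compat_r; lra.
    - right. unfold eta. field. pose proof (exp_pos T). split; lra. }
  pose proof (psi_bound T).
  pose proof (ellF_grow k (psi T) (PI / 2) H2 ltac:(lra)).
  pose proof (Rle_abs M).
  assert (ellF k (psi T) - T >= - 1).
  { assert (Rabs (ellF k (psi T) - T) <= 1) by lra.
    revert H9. unfold Rabs. destruct Rcase_abs; lra. }
  unfold T in *. lra.
Qed.

Lemma part3 : filterlim (Kpl a b) (at_left b) (locally (PI / 2)).
Proof. apply filterlim_locally. intros eps.
  assert (He := cond_pos eps).
  apply (filter_imp (fun lam => (0 < lam < b) /\ gl a b lam < Rmin (1/2) (eps / 4))).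
  2:{ apply ev_small; auto. apply Rmin_glb_lt; lra. }
  intros lam [Hl Hg]. apply ballR.
  pose proof (Rmin_l (1/2) (eps/4)) as Hr1. pose proof (Rmin_r (1/2) (eps/4)) as Hr2.
  destruct (kmod_props a b hba lam Hl) as [H0 [H1 [H2 H3]]].
  unfold Kpl, ellK. set (k := kmod a b lam) in *.
  set (g := gl a b lam) in *.
  assert (Hg0 : 0 < g) by (apply gl_pos; auto).
  set (m := sqrt (1 - k ^ 2)).
  assert (Hm2 : m ^ 2 = 1 - k ^ 2) by (unfold m; apply pow2_sqrt; lra).
  assert (Hm : m ^ 2 < 1) by lra.
  assert (Hd : forall z, is_derive (fun z => ellF m z - z) z (fk m z - 1)).
  { intro z. apply (is_derive_minus (ellF m) (fun z => z)). apply ellF_der; auto. auto_derive; auto. }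
  destruct (mvt_all _ _ 0 (PI / 2) Hd) as [c [_ Hc]].
  rewrite ellF0 in Hc.
  pose proof (fk_ge1 m c Hm) as Hf1. pose proof (fk_le m c Hm) as Hf2.
  replace (1 - m ^ 2) with (k ^ 2) in Hf2 by lra. rewrite sqrt_pow2 in Hf2 by lra.
  assert (Hk0 : 0 < k) by nra.
  assert (Hik : / k <= 1 + 2 * g).
  { assert (1 <= k * (1 + 2 * g)) by nra.
    apply Rle_trans with (/ k * (k * (1 + 2 * g))).
    - rewrite <- (Rmult_1_r (/ k)) at 1. apply Rmult_le_compat_l; auto. left; apply Rinv_0_lt_compat; auto.
    - right. field. lra. }
  pose proof PI_RGT_0. pose proof PI_4.
  replace (ellF m (PI / 2) - PI / 2) with ((fk m c - 1) * (PI / 2)) by lra.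
  rewrite Rabs_pos_eq by nra. nra.
Qed.

Lemma arcsinh_lip x y : Rabs (arcsinh y - arcsinh x) <= Rabs (y - x).
Proof.
  rewrite <- (Rmult_1_l (Rabs (y - x))). apply (lip_all arcsinh (fun z => / sqrt (z ^ 2 + 1))).
  - intro z. apply is_derive_Reals, derivable_pt_lim_arcsinh.
  - intro z. assert (1 <= sqrt (z ^ 2 + 1)).
    { apply Rle_trans with (sqrt 1); [rewrite sqrt_1; lra| apply sqrt_le_1_alt; pose proof (pow2_ge_0 z); lra]. }
    rewrite Rabs_pos_eq.
    + apply Rle_trans with (/1); [apply Rinv_le_contravar; lra| rewrite Rinv_1; lra].
    + left; apply Rinv_0_lt_compat; lra.
Qed.

Lemma part4 : filterlim (zetal a b) (at_left b) (locally h).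
Proof. apply filterlim_locally. intros eps.
  assert (He := cond_pos eps).
  set (v := fun l => sqrt (a ^ 2 - l ^ 2) / l).
  assert (Hv : continuous v b).
  { apply (ex_derive_continuous (V:=R_NormedModule)). unfold v. auto_derive.
    repeat split; try nra. }
  set (S0 := Rabs (h / 2) + 1).
  assert (HS0 : 0 < S0) by (unfold S0; pose proof (Rabs_pos (h/2)); lra).
  assert (HE : 0 < exp S0 ^ 2) by (apply pow2_gt_0; pose proof (exp_pos S0); lra).
  set (eta := (eps / 4) / (S0 * exp S0 ^ 2)).
  assert (Heta : 0 < eta) by (apply Rdiv_lt_0_compat; nra).
  assert (Hrho : 0 < Rmin 1 (eps / 4)) by (apply Rmin_glb_lt; lra).
  pose proof (proj1 (filterlim_locally v (v b)) Hv (mkposreal _ Hrho)) as Hvl.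
  assert (Hvl' : at_left b (fun l => ball (v b) (mkposreal _ Hrho) (v l))).
  { unfold at_left, within. apply (filter_imp _ _ (fun x H _ => H) Hvl). }
  apply (filter_imp (fun lam => ((0 < lam < b) /\ gl a b lam < eta) /\ ball (v b) (mkposreal _ Hrho) (v lam))).
  2:{ apply filter_and; auto. apply ev_small; auto. }
  intros lam [[Hl Hg] Hb]. apply ballR in Hb. change (Rabs (v lam - v b) < Rmin 1 (eps / 4)) in Hb.
  apply ballR.
  pose proof (Rmin_l 1 (eps / 4)) as Hr1. pose proof (Rmin_r 1 (eps / 4)) as Hr2.
  destruct (kmod_props a b hba lam Hl) as [H0 [H1 [H2 H3]]].
  rewrite (zeta_val a b hb hba lam Hl).
  set (k := kmod a b lam) in *.
  set (s := arcsinh (sqrt (a ^ 2 - lam ^ 2) / lam)).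
  assert (Hh2 : h / 2 = arcsinh (v b)).
  { unfold v. rewrite <- hsinh. rewrite arcsinh_sinh. reflexivity. }
  assert (Hs0 : Rabs (s - h / 2) <= Rabs (v lam - v b)).
  { rewrite Hh2. unfold s. apply arcsinh_lip. }
  assert (Hs : Rabs (s - h / 2) < eps / 4) by lra.
  assert (HsS : Rabs s <= S0).
  { unfold S0. replace s with ((s - h / 2) + h / 2) by ring.
    pose proof (Rabs_triang (s - h / 2) (h / 2)). lra. }
  pose proof (E_bound k s H2). pose proof (Bd_le k s S0 H2 HsS).
  assert (S0 * ((1 - k ^ 2) * exp S0 ^ 2) < eps / 4).
  { rewrite H3. apply Rlt_le_trans with (S0 * (eta * exp S0 ^ 2)).
    - apply Rmult_lt_compat_l; [lra|]. apply Rmult_lt_compat_r; lra.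
    - right. unfold eta. field. pose proof (exp_pos S0). split; lra. }
  replace (2 * ellF k (psi s) - h) with (2 * ((ellF k (psi s) - s) + (s - h / 2))) by lra.
  rewrite Rabs_mult, Rabs_pos_eq by lra.
  pose proof (Rabs_triang (ellF k (psi s) - s) (s - h / 2)). lra.
Qed.


Lemma scale_lt c D x e : 0 < c -> c <= D -> 0 < e -> Rabs x < e / D -> Rabs (c * x) < e.
Proof. intros Hc HD He Hx. rewrite Rabs_mult, (Rabs_pos_eq c) by lra.
  apply Rlt_le_trans with (c * (e / D)). apply Rmult_lt_compat_l; auto.
  apply Rle_trans with (D * (e / D)).
  - apply Rmult_le_compat_r; [apply Rlt_le, Rdiv_lt_0_compat; lra| auto].
  - right; field; lra.
Qed.

Lemma part5 : unif_compact b (fun lam t => (qt1 a b lam t, qt2 a b lam t))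
                 (fun t => (qh1 a b t, qh2 a b t)).
Proof. intros M eps He.
  assert (HD : 0 < a + b) by lra.
  destruct (core M (eps / (a + b)) 0 ltac:(apply Rdiv_lt_0_compat; lra)) as [rho [eta [Hrho [Heta Hc]]]].
  apply (filter_imp (fun lam => (0 < lam < b) /\ gl a b lam < eta)).
  2:{ apply ev_small; auto. }
  intros lam [Hl Hg] t Ht.
  destruct (kmod_props a b hba lam Hl) as [H0 [H1 [H2 H3]]].
  set (k := kmod a b lam) in *.
  destruct (Hc k 0 t H2 ltac:(lra) ltac:(rewrite Rminus_0_r, Rabs_R0; lra) Ht) as [Hs Hc'].
  rewrite !Rplus_0_r in Hs, Hc'.
  simpl. unfold qt1, qt2, qh1, qh2, sn, cn, sech. fold k. rewrite <- sin_psi, <- cos_psi.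
  split.
  - replace (a * sin (am t k) - a * sin (psi t)) with (a * (sin (am t k) - sin (psi t))) by ring.
    apply (scale_lt a (a + b)); lra.
  - replace (b * cos (am t k) - b * cos (psi t)) with (b * (cos (am t k) - cos (psi t))) by ring.
    apply (scale_lt b (a + b)); lra.
Qed.

Lemma part7 : unif_compact b (fun lam t => (qt1 a b lam (t + deltal a b lam), qt2 a b lam (t + deltal a b lam)))
                 (fun t => (- qh1 a b (t - h), - qh2 a b (t - h))).
Proof. intros M eps He.
  assert (HD : 0 < a + b) by lra.
  destruct (core M (eps / (a + b)) (- h) ltac:(apply Rdiv_lt_0_compat; lra)) as [rho [eta [Hrho [Heta Hc]]]].
  pose proof (proj1 (filterlim_locally _ h) part4 (mkposreal _ Hrho)) as Hz.
  apply (filter_imp (fun lam => ((0 < lam < b) /\ gl a b lam < eta) /\ ball h (mkposreal _ Hrho) (zetal a b lam))).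
  2:{ apply filter_and; auto. apply ev_small; auto. }
  intros lam [[Hl Hg] Hb] t Ht. apply ballR in Hb. change (Rabs (zetal a b lam - h) < rho) in Hb.
  destruct (kmod_props a b hba lam Hl) as [H0 [H1 [H2 H3]]].
  set (k := kmod a b lam) in *.
  assert (Hsh : t + deltal a b lam = (t + - zetal a b lam) + 2 * ellK k).
  { unfold zetal, Kl. fold k. ring. }
  assert (Hzz : Rabs (- zetal a b lam - - h) < rho).
  { replace (- zetal a b lam - - h) with (- (zetal a b lam - h)) by ring. rewrite Rabs_Ropp. lra. }
  destruct (Hc k (- zetal a b lam) t H2 ltac:(lra) Hzz Ht) as [Hs Hc'].
  simpl. unfold qt1, qt2, qh1, qh2, sn, cn, sech. fold k. rewrite Hsh.
  rewrite am_plus2K by auto. rewrite neg_sin, neg_cos.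
  replace (t - h) with (t + - h) by ring. rewrite <- sin_psi, <- cos_psi.
  split.
  - replace (a * - sin (am (t + - zetal a b lam) k) - - (a * sin (psi (t + - h))))
      with (a * - (sin (am (t + - zetal a b lam) k) - sin (psi (t + - h)))) by ring.
    apply (scale_lt a (a + b)); try lra. rewrite Rabs_Ropp. auto.
  - replace (b * - cos (am (t + - zetal a b lam) k) - - (b * cos (psi (t + - h))))
      with (b * - (cos (am (t + - zetal a b lam) k) - cos (psi (t + - h)))) by ring.
    apply (scale_lt b (a + b)); try lra. rewrite Rabs_Ropp. auto.
Qed.

Lemma part9 : unif_compact b (fun lam t => (qt1 a b lam (t - deltal a b lam), qt2 a b lam (t - deltal a b lam)))
                 (fun t => (- qh1 a b (t + h), - qh2 a b (t + h))).
Proof. intros M eps He.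
  assert (HD : 0 < a + b) by lra.
  destruct (core M (eps / (a + b)) h ltac:(apply Rdiv_lt_0_compat; lra)) as [rho [eta [Hrho [Heta Hc]]]].
  pose proof (proj1 (filterlim_locally _ h) part4 (mkposreal _ Hrho)) as Hz.
  apply (filter_imp (fun lam => ((0 < lam < b) /\ gl a b lam < eta) /\ ball h (mkposreal _ Hrho) (zetal a b lam))).
  2:{ apply filter_and; auto. apply ev_small; auto. }
  intros lam [[Hl Hg] Hb] t Ht. apply ballR in Hb. change (Rabs (zetal a b lam - h) < rho) in Hb.
  destruct (kmod_props a b hba lam Hl) as [H0 [H1 [H2 H3]]].
  set (k := kmod a b lam) in *.
  assert (Hsh : t - deltal a b lam = (t + zetal a b lam) - 2 * ellK k).
  { unfold zetal, Kl. fold k. ring. }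
  destruct (Hc k (zetal a b lam) t H2 ltac:(lra) Hb Ht) as [Hs Hc'].
  simpl. unfold qt1, qt2, qh1, qh2, sn, cn, sech. fold k. rewrite Hsh.
  rewrite am_minus2K by auto. rewrite sin_mPI, cos_mPI.
  rewrite <- sin_psi, <- cos_psi.
  split.
  - replace (a * - sin (am (t + zetal a b lam) k) - - (a * sin (psi (t + h))))
      with (a * - (sin (am (t + zetal a b lam) k) - sin (psi (t + h)))) by ring.
    apply (scale_lt a (a + b)); try lra. rewrite Rabs_Ropp. auto.
  - replace (b * - cos (am (t + zetal a b lam) k) - - (b * cos (psi (t + h))))
      with (b * - (cos (am (t + zetal a b lam) k) - cos (psi (t + h)))) by ring.
    apply (scale_lt b (a + b)); try lra. rewrite Rabs_Ropp. auto.
Qed.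

Lemma get_lam (P : R -> Prop) : at_left b P -> exists lam, P lam /\ 0 < lam < b.
Proof. intros HP.
  destruct (@filter_ex _ _ (at_left_proper_filter b) _
     (filter_and _ _ HP (ev_small a b hb hba 1 Rlt_0_1))) as [lam [H [Hl _]]].
  exists lam; auto.
Qed.

Lemma part6 : ~ unif_R b (fun lam t => (qt1 a b lam t, qt2 a b lam t))
             (fun t => (qh1 a b t, qh2 a b t)).
Proof. intros HU. destruct (get_lam _ (HU b hb)) as [lam [HP Hl]].
  destruct (kmod_props a b hba lam Hl) as [H0 [H1 [H2 H3]]].
  set (k := kmod a b lam) in *.
  destruct (HP (2 * ellK k)) as [_ Hs]. simpl in Hs. unfold qt2, qh2, cn, sech in Hs. fold k in Hs.
  pose proof (am_plus2K k 0 H2) as E. rewrite Rplus_0_l, am0 in E by auto.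
  rewrite E, Rplus_0_l, cos_PI in Hs.
  pose proof (cosh_pos (2 * ellK k)).
  assert (0 < / cosh (2 * ellK k)) by (apply Rinv_0_lt_compat; auto).
  rewrite Rabs_left in Hs by nra. nra.
Qed.

Lemma part8 : ~ unif_R b (fun lam t => (qt1 a b lam (t + deltal a b lam), qt2 a b lam (t + deltal a b lam)))
             (fun t => (- qh1 a b (t - h), - qh2 a b (t - h))).
Proof. intros HU. destruct (get_lam _ (HU b hb)) as [lam [HP Hl]].
  destruct (kmod_props a b hba lam Hl) as [H0 [H1 [H2 H3]]].
  set (k := kmod a b lam) in *.
  destruct (HP (- deltal a b lam)) as [_ Hs]. simpl in Hs. unfold qt2, qh2, cn, sech in Hs. fold k in Hs.
  rewrite Rplus_opp_l, am0, cos_0 in Hs by auto.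
  set (q := / cosh (- deltal a b lam - h)) in *.
  assert (0 < q) by (apply Rinv_0_lt_compat, cosh_pos).
  rewrite Rabs_right in Hs by nra. nra.
Qed.

Lemma part10 : ~ unif_R b (fun lam t => (qt1 a b lam (t - deltal a b lam), qt2 a b lam (t - deltal a b lam)))
             (fun t => (- qh1 a b (t + h), - qh2 a b (t + h))).
Proof. intros HU. destruct (get_lam _ (HU b hb)) as [lam [HP Hl]].
  destruct (kmod_props a b hba lam Hl) as [H0 [H1 [H2 H3]]].
  set (k := kmod a b lam) in *.
  destruct (HP (deltal a b lam)) as [_ Hs]. simpl in Hs. unfold qt2, qh2, cn, sech in Hs. fold k in Hs.
  rewrite Rminus_diag, am0, cos_0 in Hs by auto.
  set (q := / cosh (deltal a b lam + h)) in *.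
  assert (0 < q) by (apply Rinv_0_lt_compat, cosh_pos).
  rewrite Rabs_right in Hs by nra. nra.
Qed.

End Main.

Theorem lemma3 (a b h : R) (hb : 0 < b) (hba : b < a)
  (hh : 0 < h) (hsinh : sinh (h / 2) = sqrt (a ^ 2 - b ^ 2) / b) :
  filterlim (kmod a b) (at_left b) (locally 1) /\
  filterlim (Kl a b) (at_left b) (Rbar_locally p_infty) /\
  filterlim (Kpl a b) (at_left b) (locally (PI / 2)) /\
  filterlim (zetal a b) (at_left b) (locally h) /\
  (* q~0(t) -> q^0(t) *)
  unif_compact b (fun lam t => (qt1 a b lam t, qt2 a b lam t))
                 (fun t => (qh1 a b t, qh2 a b t)) /\
  ~ unif_R b (fun lam t => (qt1 a b lam t, qt2 a b lam t))
             (fun t => (qh1 a b t, qh2 a b t)) /\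
  (* q~0(t + delta) -> - q^0(t - h) *)
  unif_compact b (fun lam t => (qt1 a b lam (t + deltal a b lam), qt2 a b lam (t + deltal a b lam)))
                 (fun t => (- qh1 a b (t - h), - qh2 a b (t - h))) /\
  ~ unif_R b (fun lam t => (qt1 a b lam (t + deltal a b lam), qt2 a b lam (t + deltal a b lam)))
             (fun t => (- qh1 a b (t - h), - qh2 a b (t - h))) /\
  (* q~0(t - delta) -> - q^0(t + h) *)
  unif_compact b (fun lam t => (qt1 a b lam (t - deltal a b lam), qt2 a b lam (t - deltal a b lam)))
                 (fun t => (- qh1 a b (t + h), - qh2 a b (t + h))) /\
  ~ unif_R b (fun lam t => (qt1 a b lam (t - deltal a b lam), qt2 a b lam (t - deltal a b lam)))
             (fun t => (- qh1 a b (t + h), - qh2 a b (t + h))).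
Proof.
  split. eapply part1; eauto.
  split. eapply part2; eauto.
  split. eapply part3; eauto.
  split. eapply part4; eauto.
  split. eapply part5; eauto.
  split. eapply part6; eauto.
  split. eapply part7; eauto.
  split. eapply part8; eauto.
  split. eapply part9; eauto.
  eapply part10; eauto.
Qed.
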